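(* Let $G$ be a signed digraph with $n$ vertices and without positive cycles, and let $f$ be a Boolean network on $G$ having a fixed point. Then $f$ has a synchronizing word of length $n$.
   Context: A signed digraph on $V$ is $(V,E)$ with $E\subseteq V\times V\times\{-1,1\}$; cycles have no repeated vertices (a loop is a cycle) and their sign is the product of arc signs. A Boolean network (BN) is $f:\{0,1\}^V\to\{0,1\}^V$; its signed interaction digraph has a positive (negative) arc from $j$ to $i$ iff for some $x$ with $x_j=0$, $f_i(x+e_j)-f_i(x)$ is positive (negative). A BN on $G$ is one whose signed interaction digraph is $G$. $f^i(x)$ is $x$ with $x_i$ replaced by $f_i(x)$; $f^{i_1\cdots i_\ell}=f^{i_\ell}\circ\cdots\circ f^{i_1}$; $w$ is synchronizing if $f^w$ is constant. *)

(* Defs.v *)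
From mathcomp Require Import all_boot.
Set Implicit Arguments. Unset Strict Implicit. Unset Printing Implicit Defensive.

(* Signs: true = positive (+1), false = negative (-1). *)
(* A signed digraph on V is given by its arc set E ⊆ V × V × {-1,1},
   represented as a boolean relation: G j i s  <->  (j,i,s) ∈ E. *)
Definition sdigraph (V : finType) := V -> V -> bool -> bool.

(* Sign of a list of arc signs: their product, i.e. positive iff the
   number of negative signs is even. *)
Definition sign_prod (s : seq bool) : bool := ~~ odd (count negb s).

Definition is_cycle (V : finType) (G : sdigraph V) (c : seq V) (s : seq bool) : Prop :=
  [/\ 0 < size c, uniq c, size s = size c &
      forall (x0 : V) t, t < size c ->
        G (nth x0 c t) (nth x0 c (t.+1 %% size c)) (nth true s t)].

Definition no_positive_cycle (V : finType) (G : sdigraph V) : Prop :=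
  forall c s, is_cycle G c s -> sign_prod s = false.

Definition config (V : finType) := {ffun V -> bool}.
Definition BN (V : finType) := config V -> config V.

Definition setc (V : finType) (x : config V) (j : V) (b : bool) : config V :=
  [ffun k => if k == j then b else x k].

Definition interaction (V : finType) (f : BN V) : sdigraph V :=
  fun j i s => [exists x : config V,
    (x j == false) &&
    (if s then (f x i == false) && (f (setc x j true) i == true)
          else (f x i == true) && (f (setc x j true) i == false))].

Definition BN_on (V : finType) (f : BN V) (G : sdigraph V) : Prop :=
  forall j i s, interaction f j i s = G j i s.

Definition fupd (V : finType) (f : BN V) (i : V) (x : config V) : config V :=
  setc x i (f x i).

(* f^{i_1 ... i_l} = f^{i_l} o ... o f^{i_1} *)
Definition fword (V : finType) (f : BN V) (w : seq V) (x : config V) : config V :=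
  foldl (fun y i => fupd f i y) x w.

Definition synchronizing (V : finType) (f : BN V) (w : seq V) : Prop :=
  exists c : config V, forall x : config V, fword f w x = c.

Definition has_fixed_point (V : finType) (f : BN V) : Prop :=
  exists x : config V, f x = x.

(* Main.v *)
Require Import Defs.
From mathcomp Require Import all_boot.

Section Aux.
Variables (V : finType).

Lemma setcE (x : config V) j b k : setc x j b k = if k == j then b else x k.
Proof. by rewrite /setc ffunE. Qed.

Lemma walk (f : BN V) (a : config V) i n : forall y : config V,
  #|[set j | a j != y j]| <= n -> f y i != f a i ->
  exists j, a j != y j /\ interaction f j i (a j == f a i).
Proof.
elim: n => [|n IH] y Hc Hf.
- have Hy : y = a.
    apply/ffunP => k; apply/eqP; rewrite eq_sym; apply: contraT => Hk.
    move: Hc; rewrite leqn0 cards_eq0 => /eqP HD.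
    have : k \in [set j | a j != y j] by rewrite inE.
    by rewrite HD inE.
  by rewrite Hy eqxx in Hf.
- case: (pickP [pred j | a j != y j]) => [j0 Hj0|Hn]; last first.
    have Hy : y = a.
      by apply/ffunP => k; move: (Hn k) => /= /negbFE /eqP ->.
    by rewrite Hy eqxx in Hf.
  have Hj0' : a j0 != y j0 := Hj0.
  set y' := setc y j0 (a j0).
  have Hc' : #|[set j | a j != y' j]| <= n.
    have E : [set j | a j != y' j] = [set j | a j != y j] :\ j0.
      apply/setP => k; rewrite !inE /y' setcE.
      by case: (k =P j0) => [->|]; rewrite ?eqxx.
    by move: Hc; rewrite (cardsD1 j0) E inE Hj0' add1n ltnS.
  have [Hf'|Hf'] := boolP (f y' i != f a i).
    have [j [Hj HI]] := IH y' Hc' Hf'.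
    exists j; split => //; move: Hj; rewrite /y' setcE.
    by case: (j =P j0) => [->|_]; [rewrite eqxx | ].
  move/negbNE/eqP: Hf' => Hf'.
  have Hfy : f y i = ~~ f a i by move: Hf; case: (f y i); case: (f a i).
  exists j0; split => //; apply/existsP.
  move: Hj0' Hf'; rewrite /y'; case Ha: (a j0) => Hj0' Hf'.
  + have Hy0 : y j0 = false by move: Hj0'; case: (y j0).
    exists y; rewrite Hy0 /= Hf' Hfy; by case: (f a i).
  + have Hy1 : y j0 = true by move: Hj0'; case: (y j0).
    have E : setc (setc y j0 false) j0 true = y.
      apply/ffunP => k; rewrite !setcE.
      by case: (k =P j0) => [->|//]; rewrite Hy1.
    exists (setc y j0 false); rewrite E setcE eqxx /= Hf' Hfy.
    by case: (f a i).
Qed.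

Lemma pairmap_parity (g : V -> bool) a l :
  odd (count negb (pairmap (fun u v => g u == g v) a l)) = (g a != g (last a l)).
Proof.
elim: l a => [|b l IH] a /=; first by rewrite eqxx.
rewrite oddD oddb IH.
by case: (g a); case: (g b); case: (g (last b l)).
Qed.

Lemma cycle_nth (e : rel V) (c : seq V) x0 : cycle e c ->
  forall t, t < size c -> e (nth x0 c t) (nth x0 c (t.+1 %% size c)).
Proof.
case: c => [//|a l] /= Hp t Ht.
have := (pathP x0 Hp) t; rewrite size_rcons => /(_ Ht).
rewrite -rcons_cons !nth_rcons /= Ht.
case: (ltnP t (size l)) => Htl.
  by rewrite modn_small.
have Et : t = size l by apply/anti_leq; rewrite Htl andbT -ltnS.
by rewrite Et eqxx modnn.
Qed.

Lemma exists_cycle (R : rel V) (i0 : V) (U : pred V) :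
  i0 \in U -> (forall i, i \in U -> exists2 j, j \in U & R j i) ->
  exists c, [/\ 0 < size c, uniq c & cycle R c].
Proof.
move=> Hi0 HU.
pose p i := if [pick j | (j \in U) && R j i] is Some j then j else i0.
have Hp : forall i, p i \in U.
  move=> i; rewrite /p; case: pickP => [j /andP [] //|]; done.
have HpR : forall i, i \in U -> R (p i) i.
  move=> i Hi; rewrite /p; case: pickP => [j /andP [] //|Hn].
  have [j Hj HR] := HU i Hi; by move: (Hn j); rewrite Hj HR.
have Hiter : forall k, iter k p i0 \in U by case => [|k] //=.
have Hnu : ~~ uniq (traject p i0 #|V|.+1).
  apply/negP => /card_uniqP; rewrite size_traject => Hc.
  by have := max_card (mem (traject p i0 #|V|.+1)); rewrite Hc ltnn.
have [m [m' [Hmm' Hm' Heq]]] := uniqPn i0 Hnu.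
rewrite size_traject in Hm'.
rewrite !nth_traject // in Heq; last by apply: ltn_trans Hm'.
set y := iter m p i0.
have Hy : iter (m' - m).-1.+1 p y = y.
  by rewrite prednK ?subn_gt0 // /y -iterD subnK ?(ltnW Hmm').
have Hcyc : fcycle p (orbit p y) by apply/(orbitPcycle 0 3); exists (m' - m).-1.
have HallU : all (mem U) (orbit p y).
  apply/allP => z; rewrite /orbit => /trajectP [k _ ->]; rewrite /y -iterD; exact: Hiter.
exists (rev (orbit p y)); split.
- by rewrite size_rev /orbit size_traject order_gt0.
- by rewrite rev_uniq orbit_uniq.
- rewrite rev_cycle; apply: (sub_in_cycle _ HallU Hcyc).
  by move=> u v Hu _ /= /eqP <-; apply: HpR.
Qed.

End Aux.

Theorem proposition9 (V : finType) (G : sdigraph V) (f : BN V) :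
  no_positive_cycle G -> BN_on f G -> has_fixed_point f ->
  exists w : seq V, size w = #|V| /\ synchronizing f w.
Proof.
move=> Hnp Hon [xs Hfix].
have key : forall (S : {set V}) i0, i0 \notin S ->
    exists i, i \notin S /\ forall y : config V,
      (forall j, j \in S -> y j = xs j) -> f y i = xs i.
  move=> S i0 Hi0.
  pose P i := (i \notin S) && [forall y : config V,
     [forall j in S, y j == xs j] ==> (f y i == xs i)].
  case: (pickP P) => [i /andP [Hi /forallP H]|Hn].
    exists i; split => // y Hy; apply/eqP; apply: (implyP (H y)).
    by apply/forallP => j; apply/implyP => Hj; rewrite Hy.
  have Hpred : forall i, i \in [pred k | k \notin S] ->
      exists2 j, j \in [pred k | k \notin S] & [rel a b | G a b (xs a == xs b)] j i.
    move=> i Hi0'; have Hi : i \notin S := Hi0'; move: (Hn i); rewrite /P Hi /= => /negbT /forallPn [y].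
    rewrite negb_imply => /andP [/forallP Hy Hfy].
    have Hfy' : f y i != f xs i by rewrite Hfix.
    have [j [Hj HI]] := @walk _ f xs i #|V| y (max_card _) Hfy'.
    exists j => /=.
      apply: contra Hj => HjS; move: (Hy j); rewrite HjS /= eq_sym; done.
    by rewrite -Hon -{2}Hfix.
  have [c [Hc0 Huc Hcyc]] := @exists_cycle _ _ i0 [pred k | k \notin S] Hi0 Hpred.
  case: c Hc0 Huc Hcyc => [//|a l] _ Huc Hcyc.
  pose s := pairmap (fun u v => xs u == xs v) a (rcons l a).
  have Hcy : is_cycle G (a :: l) s.
    split => //; first by rewrite size_pairmap size_rcons.
    move=> x0 t Ht.
    have := @cycle_nth _ _ _ x0 Hcyc t Ht => /=.
    rewrite /s (@nth_pairmap _ x0) ?size_rcons // -rcons_cons nth_rcons Ht.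
    rewrite nth_rcons /=.
    idtac.
    case: (ltnP t (size l)) => Htl.
      by rewrite modn_small.
    have Et : t = size l by apply/anti_leq; rewrite Htl andbT -ltnS.
    by rewrite Et eqxx modnn.
  have := Hnp _ _ Hcy; rewrite /sign_prod /s pairmap_parity last_rcons eqxx.
  done.
have build : forall k, k <= #|V| -> exists w : seq V,
    [/\ size w = k, uniq w & forall x j, j \in w -> fword f w x j = xs j].
  elim => [|k IH] Hk.
    by exists [::]; split.
  have [w [Hs Hu Hw]] := IH (ltnW Hk).
  have [i0 Hi0] : exists i0, i0 \notin [set j in w].
    case: (pickP [pred j | j \notin w]) => [i0 Hi0|Hn].
      by exists i0; rewrite inE.
    have : #|V| <= size w.
      rewrite -(card_uniqP Hu); apply/subset_leq_card/subsetP => j _.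
      by move: (Hn j) => /= /negbFE.
    by rewrite Hs leqNgt Hk.
  have [i [Hi Hi2]] := key _ _ Hi0.
  move: Hi; rewrite inE => Hi.
  exists (rcons w i); split.
  - by rewrite size_rcons Hs.
  - by rewrite rcons_uniq Hi Hu.
  - move=> x j; rewrite mem_rcons inE /fword foldl_rcons -/(fword f w x) /fupd setcE.
    case: (j =P i) => [->|Hji] /= Hj.
      by apply: Hi2 => j'; rewrite inE => Hj'; apply: Hw.
    by apply: Hw.
have [w [Hs Hu Hw]] := build #|V| (leqnn _).
exists w; split => //; exists xs => x; apply/ffunP => j; apply: Hw.
apply: contraT => Hj; have := max_card [predU1 j & w].
by rewrite cardU1 Hj (card_uniqP Hu) Hs add1n ltnn.
Qed.
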